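(* Let $p$ be a prime, $d\geq 2$, let $X$ be the free abelian pro-$p$ group on $x_1,\ldots,x_d$, and let $R=\mathbb{Z}_p[[X]]$ be its completed group algebra over $\mathbb{Z}_p$. Let $\mathcal{C}\subseteq X^{(d)}$ denote the set of all bases $\mathbf{y}=(y_1,\ldots,y_d)$ of $X$. Then $$\bigcap_{\mathbf{y}\in\mathcal{C}}\big((y_1-1)R+\cdots+(y_{d-1}-1)R\big)=0.$$
   Context: A basis of the free abelian pro-$p$ group $X\cong\mathbb{Z}_p^{d}$ is a $d$-tuple $(y_1,\ldots,y_d)$ of elements of $X$ such that $X$ is the (internal) direct product of the procyclic subgroups $\overline{\langle y_i\rangle}\cong\mathbb{Z}_p$, equivalently a tuple topologically generating $X$. $\mathbb{Z}_p[[X]]=\varprojlim \mathbb{Z}_p/p^n[X/U]$ over open subgroups $U$ and $n$. *)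

(* Defs.v *)
From HB Require Import structures.
From mathcomp Require Import all_boot all_order all_algebra.
Set Implicit Arguments. Unset Strict Implicit. Unset Printing Implicit Defensive.
Import Order.TTheory GRing.Theory Num.Theory.
Local Open Scope ring_scope.

(* Level n (n : nat) of the inverse system corresponds to the modulus p^(n+1):
   the finite quotients Z/p^(n+1) of Z_p, and X/p^(n+1)X = (Z/p^(n+1))^d of
   X = Z_p^d (the subgroups p^(n+1) X are cofinal among open subgroups). *)
Definition lvl (p n : nat) : nat := (p ^ n.+1)%N.

Notation Zl p n := 'Z_(lvl p n).
Notation Gl p d n := 'rV['Z_(lvl p n)]_d.
(* Elements of the finite group algebra Z/p^(n+1) [ (Z/p^(n+1))^d ],
   as coefficient functions on the finite group. *)
Notation Al p d n := {ffun 'rV['Z_(lvl p n)]_d -> 'Z_(lvl p n)}.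

Definition prZ (p n : nat) (a : Zl p n.+1) : Zl p n := (val a)%:R.
Definition prG (p d n : nat) (v : Gl p d n.+1) : Gl p d n := map_mx (@prZ p n) v.
Definition prA (p d n : nat) (f : Al p d n.+1) : Al p d n :=
  [ffun g => \sum_(h : Gl p d n.+1 | prG h == g) prZ (f h)].

(* X = free abelian pro-p group Z_p^d, as the inverse limit of (Z/p^(n+1))^d *)
Definition X (p d : nat) :=
  { x : forall n, Gl p d n | forall n, prG (x n.+1) = x n }.

(* R = Z_p[[X]], as the inverse limit of the finite group algebras *)
Definition R (p d : nat) :=
  { f : forall n, Al p d n | forall n, prA (f n.+1) = f n }.

Definition conv (p d n : nat) (f g : Al p d n) : Al p d n :=
  [ffun x => \sum_(y : Gl p d n) f y * g (x - y)].

Definition ym1 (p d : nat) (y : X p d) (n : nat) : Al p d n :=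
  [ffun h => (h == proj1_sig y n)%:R - (h == 0)%:R].

(* a basis: a d-tuple topologically generating X, i.e. whose image generates
   every finite quotient X/p^(n+1)X *)
Definition is_basis (p d : nat) (y : 'I_d -> X p d) : Prop :=
  forall n (v : Gl p d n), exists c : 'I_d -> int,
    v = \sum_(i < d) (proj1_sig (y i) n) *~ c i.

(* f lies in the ideal (y_1 - 1)R + ... + (y_{d-1} - 1)R; equality in the
   inverse limit R is equality at every level, and ring operations of R are
   levelwise. *)
Definition in_ideal (p d : nat) (y : 'I_d -> X p d) (f : R p d) : Prop :=
  exists r : 'I_d.-1 -> R p d,
    forall n, proj1_sig f n =
      \sum_(i < d.-1) conv (ym1 (y (widen_ord (leq_pred d) i)) n) (proj1_sig (r i) n).

Definition R_is_zero (p d : nat) (f : R p d) : Prop :=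
  forall n, proj1_sig f n = 0.

(* Main.v *)
Require Import Defs.
From HB Require Import structures.
From mathcomp Require Import all_boot all_order all_algebra.
From mathcomp Require Import perm ring zify.
Set Implicit Arguments. Unset Strict Implicit. Unset Printing Implicit Defensive.
Import Order.TTheory GRing.Theory Num.Theory.
Local Open Scope ring_scope.


Section Arith.
Variable p : nat.
Hypothesis hp : prime p.

Lemma lvl_gt1 k : (1 < lvl p k)%N.
Proof.
rewrite /lvl expnS; have p1 := prime_gt1 hp.
apply: leq_trans p1 _; apply: leq_pmulr; by rewrite expn_gt0 prime_gt0.
Qed.

Lemma dvd_lvl e k : (e <= k.+1)%N -> (p ^ e %| lvl p k)%N.
Proof. by move=> h; rewrite /lvl dvdn_exp2l. Qed.

Lemma valZ_nat k n : val (n%:R : 'Z_(lvl p k)) = (n %% lvl p k)%N.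
Proof. exact: val_Zp_nat (lvl_gt1 k) n. Qed.

Lemma resN k e n : (e <= k.+1)%N -> (val (n%:R : 'Z_(lvl p k)) = n %[mod p ^ e])%N.
Proof. by move=> h; rewrite valZ_nat modn_dvdm // dvd_lvl. Qed.

Lemma resD k e (x y : 'Z_(lvl p k)) : (e <= k.+1)%N ->
  (val (x + y)%R = val x + val y %[mod p ^ e])%N.
Proof. by move=> h; rewrite -{1}(natr_Zp x) -{1}(natr_Zp y) -natrD resN. Qed.

Lemma resM k e (x y : 'Z_(lvl p k)) : (e <= k.+1)%N ->
  (val (x * y)%R = val x * val y %[mod p ^ e])%N.
Proof. by move=> h; rewrite -{1}(natr_Zp x) -{1}(natr_Zp y) -natrM resN. Qed.

Lemma resB k e (x y : 'Z_(lvl p k)) : (e <= k.+1)%N ->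
  (val (x - y)%R + val y = val x %[mod p ^ e])%N.
Proof. by move=> h; rewrite -resD // subrK. Qed.

Lemma dvd_res e a b : (a = b %[mod p ^ e])%N -> (p ^ e %| a)%N = (p ^ e %| b)%N.
Proof. by rewrite /dvdn => ->. Qed.

End Arith.


Section Red.
Variable p : nat.
Hypothesis hp : prime p.

Definition redZ k n (a : 'Z_(lvl p k)) : 'Z_(lvl p n) := (val a)%:R.

Lemma redZ_nat k n b : (n <= k)%N -> redZ n (b%:R : 'Z_(lvl p k)) = b%:R.
Proof.
move=> h; rewrite /redZ valZ_nat //.
rewrite -(Zp_nat_mod (lvl_gt1 hp n)) -[in RHS](Zp_nat_mod (lvl_gt1 hp n)).
by rewrite modn_dvdm //; rewrite /lvl dvdn_exp2l.
Qed.

Lemma redZ_id k (a : 'Z_(lvl p k)) : redZ k a = a.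
Proof. by rewrite /redZ natr_Zp. Qed.

Lemma redZD k n (x y : 'Z_(lvl p k)) : (n <= k)%N -> redZ n (x + y) = redZ n x + redZ n y.
Proof. by move=> h; rewrite -{1}(natr_Zp x) -{1}(natr_Zp y) -natrD redZ_nat // natrD. Qed.

Lemma redZM k n (x y : 'Z_(lvl p k)) : (n <= k)%N -> redZ n (x * y) = redZ n x * redZ n y.
Proof. by move=> h; rewrite -{1}(natr_Zp x) -{1}(natr_Zp y) -natrM redZ_nat // natrM. Qed.

Lemma redZ0 k n : redZ n (0 : 'Z_(lvl p k)) = 0.
Proof. by []. Qed.

Lemma redZ_sum k n (I : finType) (P : pred I) (F : I -> 'Z_(lvl p k)) : (n <= k)%N ->
  redZ n (\sum_(i | P i) F i) = \sum_(i | P i) redZ n (F i).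
Proof.
move=> h; apply: (big_morph (redZ n)) => //; move=> x y; exact: redZD.
Qed.

Lemma redZ_comp k l n (a : 'Z_(lvl p k)) : (n <= l)%N -> (l <= k)%N ->
  redZ n (redZ l a) = redZ n a.
Proof. by move=> h1 h2; rewrite /redZ -/(redZ n _) redZ_nat. Qed.

Variable d : nat.

Lemma iter_prA (f : R p d) n m : (n <= m)%N -> forall g0,
  sval f n g0 = \sum_(h : Gl p d m | map_mx (@redZ m n) h == g0) redZ n (sval f m h).
Proof.
elim: m => [|m IH].
  rewrite leqn0 => /eqP -> g0.
  rewrite (eq_bigl (pred1 g0)); last first.
    by move=> h /=; congr (_ == _); apply/matrixP => i j; rewrite mxE redZ_id.
  by rewrite big_pred1_eq redZ_id.
rewrite leq_eqVlt => /orP [/eqP ->|hnm] g0.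
  rewrite (eq_bigl (pred1 g0)); last first.
    by move=> h /=; congr (_ == _); apply/matrixP => i j; rewrite mxE redZ_id.
  by rewrite big_pred1_eq redZ_id.
rewrite ltnS in hnm.
have hc : forall h' : Gl p d m.+1, map_mx (@redZ m n) (prG h') = map_mx (@redZ m.+1 n) h'.
  by move=> h'; apply/matrixP => i j; rewrite !mxE /prZ -/(redZ _ _) redZ_comp.
rewrite IH // -(proj2_sig f m).
under eq_bigr => h _ do rewrite /prA ffunE redZ_sum //.
rewrite (exchange_big_dep (fun h' : Gl p d m.+1 => map_mx (@redZ m.+1 n) h' == g0)) /=.
  apply: eq_bigr => h' hh'.
  rewrite (big_pred1 (prG h')); last first.
    move=> h /=; apply/andP/eqP => [[_ /eqP ->] //|->]; split => //.
    by rewrite hc.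
  by rewrite /prZ -/(redZ _ _) redZ_comp.
by move=> h h' /eqP <- /eqP <-; rewrite hc.
Qed.

End Red.


Section Phi.
Variable p : nat.
Hypothesis hp : prime p.
Variable k : nat.

Definition phi (a : 'Z_(lvl p k)) : 'F_p := (val a)%:R.

Lemma phi_nat b : phi (b%:R) = b%:R.
Proof.
rewrite /phi valZ_nat // -Fp_nat_mod // -[in RHS]Fp_nat_mod //.
by rewrite modn_dvdm // -{1}(expn1 p) /lvl dvdn_exp2l.
Qed.

Lemma phi_is_nmod : nmod_morphism phi.
Proof.
split; first by rewrite /phi.
by move=> x y; rewrite -{1}(natr_Zp x) -{1}(natr_Zp y) -natrD phi_nat natrD.
Qed.

Lemma phi_is_monoid : monoid_morphism phi.
Proof.
split; first by rewrite -[1]/(1%:R) phi_nat.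
by move=> x y; rewrite -{1}(natr_Zp x) -{1}(natr_Zp y) -natrM phi_nat natrM.
Qed.

HB.instance Definition _ := GRing.isNmodMorphism.Build _ _ phi phi_is_nmod.
HB.instance Definition _ := GRing.isMonoidMorphism.Build _ _ phi phi_is_monoid.

Lemma phi_det n (A : 'M_n) : \det (map_mx phi A) = phi (\det A).
Proof. exact: det_map_mx. Qed.

Lemma unit_phi (x : 'Z_(lvl p k)) : (x \is a GRing.unit) = (phi x != 0).
Proof.
rewrite -(natr_Zp x) unitZpE ?lvl_gt1 // phi_nat.
rewrite -[_ != 0](unitfE) unitFpE // /lvl coprime_pexpl //.
Qed.

End Phi.




Section Basis.
Variable p : nat.
Hypothesis hp : prime p.
Variable d : nat.
Hypothesis hd : (2 <= d)%N.
Variable m : nat.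
Variable B : 'M['Z_(lvl p m)]_d.
Hypothesis hB : B \in unitmx.

Lemma redZ_comp2 k l n (a : 'Z_(lvl p k)) : (n <= l)%N ->
  @redZ p l n (@redZ p k l a) = @redZ p k n a.
Proof. by move=> h; rewrite [in LHS]/redZ -/(@redZ p l n _) redZ_nat. Qed.

Definition Chat n : 'M['Z_(lvl p n)]_d := map_mx (@redZ p m n) (invmx B).

Lemma Chat_unit n : Chat n \in unitmx.
Proof.
rewrite unitmxE unit_phi // -phi_det //.
have -> : map_mx (@phi p n) (Chat n) = map_mx (@phi p m) (invmx B).
  apply/matrixP => a b; rewrite !mxE /redZ phi_nat //.
rewrite phi_det // -unit_phi // -unitmxE unitmx_inv //.
Qed.

Lemma Chat_m : Chat m = invmx B.
Proof. by apply/matrixP => a b; rewrite !mxE redZ_id. Qed.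

Lemma xC_proof (l : 'I_d) n : prG (row l (Chat n.+1)) = row l (Chat n).
Proof.
by apply/matrixP => a b; rewrite !mxE /prZ -/(@redZ p _ n _) redZ_comp2.
Qed.

Definition xC (l : 'I_d) : X p d := exist _ (fun n => row l (Chat n)) (xC_proof l).

Variable j : 'I_d.

Lemma ld : (d.-1 < d)%N.
Proof. by rewrite ltn_predL; apply: leq_trans hd. Qed.

Definition lst : 'I_d := Ordinal ld.

Definition ybas (i : 'I_d) : X p d := xC (tperm j lst i).

Lemma ybas_basis : is_basis ybas.
Proof.
move=> n v.
set w := v *m invmx (Chat n).
exists (fun i => Posz (val (w 0 (tperm j lst i)))).
rewrite -[v in LHS](mulmxKV (Chat_unit n)) -/w mulmx_sum_row.
rewrite (reindex_inj (@perm_inj _ (tperm j lst))) /=.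
apply: eq_bigr => i _.
by rewrite -pmulrn -scaler_nat natr_Zp.
Qed.

End Basis.


Lemma sum_delta (T : finType) (R : pzRingType) (a : T) (F : T -> R) :
  \sum_z (z == a)%:R * F z = F a.
Proof.
rewrite (bigD1 a) //= eqxx mul1r big1 ?addr0 // => z /negbTE ->.
by rewrite mul0r.
Qed.

Section Hyp.
Variable p : nat.
Hypothesis hp : prime p.
Variable d : nat.
Hypothesis hd : (2 <= d)%N.

Lemma conv_inv n (yv : Gl p d n) (g : Al p d n) (chi : Gl p d n -> 'Z_(lvl p n)) :
  (forall h, chi (h + yv) = chi h) ->
  \sum_h conv [ffun h => (h == yv)%:R - (h == 0)%:R] g h * chi h = 0.
Proof.
move=> hchi.
have e : forall h, conv [ffun h => (h == yv)%:R - (h == 0)%:R] g h = g (h - yv) - g h.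
  move=> h; rewrite ffunE.
  under eq_bigr => z _ do rewrite ffunE mulrBl.
  by rewrite sumrB !sum_delta subr0.
under eq_bigr => h _ do rewrite e mulrBl.
rewrite sumrB (reindex_inj (addIr yv)) /=.
apply/eqP; rewrite subr_eq0; apply/eqP; apply: eq_bigr => h _.
by rewrite addrK hchi.
Qed.

Definition Hyp m (F : Gl p d m -> 'Z_(lvl p m)) :=
  forall (B : 'M['Z_(lvl p m)]_d), B \in unitmx -> forall (j : 'I_d)
    (w : 'Z_(lvl p m) -> 'Z_(lvl p m)), \sum_h F h * w ((h *m B) 0 j) = 0.

Lemma hyp_of (f : R p d) : (forall y, is_basis y -> in_ideal y f) ->
  forall m, Hyp (sval f m).
Proof.
move=> hf m B hB j w.
have [r hr] := hf _ (ybas_basis hp hd hB j).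
rewrite hr.
under eq_bigr => h _ do rewrite sum_ffunE mulr_suml.
rewrite exchange_big /=; apply: big1 => i _.
apply: conv_inv => h.
rewrite /= Chat_m mulmxDl -row_mul mulVmx // !mxE.
set l := tperm _ _ _.
have -> : (l == j) = false.
  apply/negbTE; rewrite /l; apply/eqP => e.
  have : tperm j (lst hd) (widen_ord (leq_pred d) i) = tperm j (lst hd) (lst hd).
    by rewrite e tpermR.
  move/perm_inj/(congr1 val) => /= ei.
  by move: (ltn_ord i); rewrite ei ltnn.
by rewrite addr0.
Qed.

End Hyp.


Section NatKey.
Variable p : nat.
Hypothesis hp : prime p.

Lemma Fp_eq_mod a b : ((a%:R : 'F_p) == b%:R) = (a == b %[mod p])%N.
Proof.
apply/eqP/eqP => [e|e]; last by rewrite -Fp_nat_mod // e Fp_nat_mod.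
by rewrite -!val_Fp_nat // e.
Qed.

Lemma count_sol (X Z : nat) :
  (\sum_(c : 'F_p) (val c * X == Z %[mod p]) = if p %| X then (if p %| Z then p else 0) else 1)%N.
Proof.
have e : forall c : 'F_p, (val c * X == Z %[mod p])%N = (c * X%:R == Z%:R).
  by move=> c; rewrite -Fp_eq_mod natrM natr_Zp.
under eq_bigr => c _ do rewrite e.
case: ifP => hX.
  have -> : (X%:R : 'F_p) = 0 by rewrite -Fp_nat_mod //; move/eqP: hX => /= ->.
  under eq_bigr => c _ do rewrite mulr0.
  rewrite sum_nat_const card_Fp //.
  have -> : (0 == (Z%:R : 'F_p)) = (p %| Z)%N.
    by rewrite eq_sym -[0]/(0%:R) Fp_eq_mod mod0n.
  by case: (p %| Z)%N; rewrite ?muln1 ?muln0.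
have nz : (X%:R : 'F_p) != 0.
  by rewrite -[0]/(0%:R) Fp_eq_mod mod0n; exact: negbT.
rewrite (bigD1 (Z%:R / X%:R)) //= divfK // eqxx big1 ?addn0 // => c /negbTE hc.
case: eqP => // ec; move: hc; by rewrite -ec mulfK // eqxx.
Qed.


Lemma dvd_pS e U : (p ^ e.+1 %| U)%N -> (p ^ e %| U)%N.
Proof. by apply: dvdn_trans; rewrite dvdn_exp2l. Qed.

Lemma mod_down e A U : (A == U %[mod p ^ e.+1])%N -> (A == U %[mod p ^ e])%N.
Proof.
move/eqP => h; apply/eqP.
have hd : (p ^ e %| p ^ e.+1)%N by rewrite dvdn_exp2l.
by rewrite -(modn_dvdm A hd) h modn_dvdm.
Qed.

Lemma nat_key ej ek Uj Uk : (ej <= ek)%N ->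
 (p * ((p ^ ej.+1 %| Uj) && (p ^ ek.+1 %| Uk)) + ((p ^ ej %| Uj) && (p ^ ek %| Uk)) =
  \sum_(c : 'F_p) ((p ^ ej %| Uj) && (val c * p ^ (ek - ej) * Uj == Uk %[mod p ^ ek.+1]))
  + ((p ^ ej.+1 %| Uj) && (p ^ ek %| Uk)))%N.
Proof.
move=> hle.
have p0 : (0 < p)%N by rewrite prime_gt0.
case hj: (p ^ ej %| Uj)%N; last first.
  have -> : (p ^ ej.+1 %| Uj)%N = false by apply/negbTE; apply: contraFN hj; exact: dvd_pS.
  by rewrite big1 //= muln0.
move/dvdnP: hj => [X ->].
have -> : (p ^ ej.+1 %| X * p ^ ej)%N = (p %| X)%N by rewrite expnS dvdn_pmul2r ?expn_gt0 ?p0.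
have ec : forall c : 'F_p, (val c * p ^ (ek - ej) * (X * p ^ ej) = (val c * X) * p ^ ek)%N.
  by move=> c; rewrite -{2}(subnK hle) expnD; ring.
under eq_bigr => c _ do rewrite ec.
case hk: (p ^ ek %| Uk)%N; last first.
  have -> : (p ^ ek.+1 %| Uk)%N = false by apply/negbTE; apply: contraFN hk; exact: dvd_pS.
  rewrite big1 ?andbF /= ?muln0 // => c _.
  case: eqP => // /eqP /mod_down /eqP e.
  by move: hk; rewrite /dvdn -e modnMl.
move/dvdnP: hk => [Z ->].
have -> : (p ^ ek.+1 %| Z * p ^ ek)%N = (p %| Z)%N by rewrite expnS dvdn_pmul2r ?expn_gt0 ?p0.
have em : forall c : 'F_p, (val c * X * p ^ ek == Z * p ^ ek %[mod p ^ ek.+1])%N = (val c * X == Z %[mod p])%N.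
  by move=> c; rewrite expnS -!muln_modl eqn_pmul2r ?expn_gt0 ?p0.
under eq_bigr => c _ do rewrite em.
rewrite count_sol.
by case: (p %| X)%N; case: (p %| Z)%N; rewrite /= ?muln1 ?muln0 ?addn0.
Qed.

End NatKey.


Section Core.
Variable p : nat.
Hypothesis hp : prime p.
Variable d m : nat.

Definition dvz e (x : 'Z_(lvl p m)) := (p ^ e %| val x)%N.
Definition inT (a : 'I_d -> nat) (u : 'rV['Z_(lvl p m)]_d) := [forall i, dvz (a i) (u 0 i)].
Definition dec (a : 'I_d -> nat) j := fun i => if i == j then (a i).-1 else a i.
Definition trv (j k : 'I_d) (c : nat) : 'M['Z_(lvl p m)]_d := 1%:M - c%:R *: delta_mx j k.

Lemma trv_entry j k c (u : 'rV['Z_(lvl p m)]_d) i : j != k ->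
  (u *m trv j k c) 0 i = if i == k then u 0 k - c%:R * u 0 j else u 0 i.
Proof.
move=> hjk; rewrite mulmxBr mulmx1 -scalemxAr !mxE.
rewrite (bigD1 j) //= big1 ?addr0; last first.
  by move=> l /negbTE hl; rewrite mxE hl /= mulr0.
rewrite mxE eqxx /=.
case: eqP => [->|_]; last by rewrite mulr0 mulr0 subr0.
by rewrite mulr1 mulrC.
Qed.

Lemma trv_unit j k c : j != k -> trv j k c \in unitmx.
Proof.
move=> hjk.
have h : trv j k c *m (1%:M + c%:R *: delta_mx j k) = 1%:M.
  rewrite /trv mulmxDr mulmx1 mulmxBl mul1mx -!scalemxAr -!scalemxAl.
  rewrite mul_delta_mx_cond eq_sym (negbTE hjk) mulr0n !scaler0 subr0.
  by rewrite subrK.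
by case: (mulmx1_unit h).
Qed.


Lemma dvz_sub e (x y : 'Z_(lvl p m)) : (e <= m.+1)%N ->
  dvz e (x - y) = (val y == val x %[mod p ^ e])%N.
Proof.
move=> he; have hr := resB hp x y he; rewrite /dvz /dvdn.
apply/idP/idP => [/eqP h|/eqP h].
  by rewrite -modnDml h add0n in hr; apply/eqP.
rewrite -h in hr; have : (val (x - y)%R + val y == 0 + val y %[mod p ^ e])%N by rewrite add0n hr.
by rewrite eqn_modDr mod0n.
Qed.

Variables (a : 'I_d -> nat) (j k : 'I_d).
Hypotheses (hjk : j != k) (hj : (0 < a j)%N) (hjk2 : (a j <= a k)%N) (hk : (a k <= m.+1)%N).

Definition rest (u : 'rV['Z_(lvl p m)]_d) :=
  [forall i, (i != j) && (i != k) ==> dvz (a i) (u 0 i)].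

Lemma inT_split (b : 'I_d -> nat) u : (forall i, i != j -> i != k -> b i = a i) ->
  inT b u = [&& rest u, dvz (b j) (u 0 j) & dvz (b k) (u 0 k)].
Proof.
move=> hb; apply/forallP/and3P => [h|[hr h1 h2] i].
  split => //; apply/forallP => i; apply/implyP => /andP [h1 h2].
  by rewrite -(hb i h1 h2); exact: h.
case: (eqVneq i j) => [->//|hij]; case: (eqVneq i k) => [->//|hik].
by rewrite hb //; move/forallP: hr => /(_ i); rewrite hij hik.
Qed.

Lemma rest_trv c u : rest (u *m trv j k c) = rest u.
Proof.
apply: eq_forallb => i; rewrite trv_entry //.
by case: (eqVneq i k) => [->|]; rewrite ?eqxx ?andbF.
Qed.

Lemma key_id u :
  (p * inT a u + inT (dec (dec a j) k) u =
   \sum_(c : 'F_p) inT (dec a j) (u *m trv j k (val c * p ^ (a k - a j))) + inT (dec a k) u)%N.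
Proof.
have hkj : k != j by rewrite eq_sym.
have e1 := @inT_split a u (fun _ _ _ => erefl).
have e2 : inT (dec (dec a j) k) u = [&& rest u, dvz (a j).-1 (u 0 j) & dvz (a k).-1 (u 0 k)].
  rewrite inT_split /dec ?eqxx ?(negbTE hjk) ?(negbTE hkj) // => i h1 h2.
  by rewrite (negbTE h1) (negbTE h2).
have e3 : forall c, inT (dec a j) (u *m trv j k c) =
   [&& rest u, dvz (a j).-1 (u 0 j) & (c * val (u 0%R j) == val (u 0%R k) %[mod p ^ a k])%N].
  move=> c; rewrite inT_split /dec ?eqxx ?(negbTE hkj) //; last first.
    by move=> i h1 h2; rewrite (negbTE h1).
  rewrite rest_trv !trv_entry // eqxx (negbTE hjk) dvz_sub //.
  by rewrite (resM hp) // -modnMml (resN hp) // modnMml.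
have e4 : inT (dec a k) u = [&& rest u, dvz (a j) (u 0 j) & dvz (a k).-1 (u 0 k)].
  rewrite inT_split /dec ?eqxx ?(negbTE hjk) // => i h1 h2.
  by rewrite (negbTE h2).
under eq_bigr => c _ do rewrite e3.
rewrite e1 e2 e4.
case: (rest u) => /=; last by rewrite big1 // muln0.
rewrite /dvz.
have ha : a j = (a j).-1.+1 by rewrite prednK.
have hb : a k = (a k).-1.+1 by rewrite prednK //; apply: leq_trans hjk2.
rewrite ha hb /= subSS.
apply: nat_key => //; rewrite -!subn1; exact: leq_sub2r.
Qed.

End Core.


Section Ind.
Variable p : nat.
Hypothesis hp : prime p.
Variable d m : nat.
Hypothesis hd : (2 <= d)%N.
Variable F : 'rV['Z_(lvl p m)]_d -> 'Z_(lvl p m).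
Hypothesis hF : forall (B : 'M['Z_(lvl p m)]_d), B \in unitmx -> forall (j : 'I_d)
    (w : 'Z_(lvl p m) -> 'Z_(lvl p m)), \sum_h F h * w ((h *m B) 0 j) = 0.

Local Notation dvz := (@dvz p m).
Local Notation trvl := (@trv p d m).

Lemma dvz0 e : dvz e 0.
Proof. by rewrite /dvz dvdn0. Qed.

Lemma dvz_e0 x : dvz 0 x.
Proof. by rewrite /dvz expn0 dvd1n. Qed.

Lemma dvz_add e x y : (e <= m.+1)%N -> dvz e x -> dvz e y -> dvz e (x + y).
Proof.
move=> he hx hy; rewrite /dvz (dvd_res (resD hp x y he)).
exact: dvdn_add.
Qed.

Lemma dvz_subr e x y : (e <= m.+1)%N -> dvz e x -> dvz e y -> dvz e (x - y).
Proof.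
move=> he hx hy; move: (resB hp x y he) => /dvd_res h.
by move: hx; rewrite /dvz -h dvdn_addl.
Qed.

Lemma dvz_sum e (I : finType) (G : I -> 'Z_(lvl p m)) : (e <= m.+1)%N ->
  (forall i, dvz e (G i)) -> dvz e (\sum_i G i).
Proof.
move=> he hG; apply: (big_ind (dvz e)); [exact: dvz0| |by []].
by move=> x y; apply: dvz_add.
Qed.

Lemma dvz_mono e e' x : (e' <= e)%N -> dvz e x -> dvz e' x.
Proof. by move=> h; apply: dvdn_trans; rewrite dvdn_exp2l. Qed.

Lemma dvz_pmul e x : (e.+1 <= m.+1)%N -> dvz e.+1 (p%:R * x) -> dvz e x.
Proof.
move=> he.
have h1 : (val (p%:R * x)%R = p * val x %[mod p ^ e.+1])%N.
  by rewrite (resM hp) // -modnMml (resN hp) // modnMml.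
by rewrite /dvz (dvd_res h1) expnS dvdn_pmul2l // prime_gt0.
Qed.

Definition S (A : 'M['Z_(lvl p m)]_d) (a : 'I_d -> nat) (t : 'rV['Z_(lvl p m)]_d) := \sum_h F h * (inT a (h *m A - t))%:R.

Lemma sum_dec (a : 'I_d -> nat) j : (0 < a j)%N -> (\sum_i dec a j i).+1 = (\sum_i a i)%N.
Proof.
move=> h; rewrite [RHS](bigD1 j) //= [X in X.+1](bigD1 j) //= /dec eqxx.
rewrite -addSn prednK //; congr (_ + _)%N; apply: eq_bigr => i /negbTE ->.
by [].
Qed.

Lemma dec_le (a : 'I_d -> nat) j i : (dec a j i <= a i)%N.
Proof. by rewrite /dec; case: (i == j) => //; exact: leq_pred. Qed.

Lemma S_id A a j k t : j != k -> (0 < a j)%N -> (a j <= a k)%N -> (a k <= m.+1)%N ->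
  p%:R * S A a t + S A (dec (dec a j) k) t =
  \sum_(c : 'F_p) S (A *m trvl j k (val c * p ^ (a k - a j))%N) (dec a j) (t *m trvl j k (val c * p ^ (a k - a j))%N)
  + S A (dec a k) t.
Proof.
move=> hjk hj hjk2 hk.
rewrite /S mulr_sumr -big_split exchange_big /= -big_split /=.
apply: eq_bigr => h _.
rewrite -mulr_sumr mulrCA -mulrDr -mulrDr -natrM -natrD -natr_sum -natrD.
congr (_ * _%:R).
under eq_bigr => c _ do rewrite mulmxA -mulmxBl.
exact: key_id.
Qed.

Lemma main N : forall a A t, (\sum_i a i)%N = N -> (forall i, (a i <= m.+1)%N) ->
  A \in unitmx -> dvz (m.+1 - N) (S A a t).
Proof.
elim/ltn_ind: N => N IH a A t hN ha hA.
have d0 : (0 < #|'I_d|)%N by rewrite card_ord; apply: leq_trans hd.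
have [k hk] := bigop.eq_bigmax a d0.
have hmax : forall i, (a i <= a k)%N by move=> i; rewrite -hk; exact: bigop.leq_bigmax.
case: (pickP (fun j => (j != k) && (0 < a j)%N)) => [j /andP [hjk hj] | hnone].
  case: (leqP m.+1 N) => hNm.
    by rewrite (eqnP (_ : m.+1 - N == 0)%N) ?subn_eq0 // dvz_e0.
  set e := (m.+1 - N)%N.
  have he : (e.+1 <= m.+1)%N.
    rewrite /e; have : (0 < N)%N.
      by rewrite -hN (bigD1 j) //= (ltn_addr _ hj).
    by case: N {IH hN hNm e} => // N _; rewrite subSS ltnS leq_subr.
  have hs1 : (\sum_i dec a j i).+1 = N by rewrite sum_dec.
  have hkj : dec a j k = a k by rewrite /dec eq_sym (negbTE hjk).
  have hs2 : (\sum_i dec (dec a j) k i).+2 = N.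
    by rewrite sum_dec ?hkj ?hs1 //; apply: leq_trans hj (hmax j).
  have hd1 : forall i, (dec a j i <= m.+1)%N by move=> i; apply: leq_trans (dec_le _ _ _) (ha i).
  have hd2 : forall i, (dec (dec a j) k i <= m.+1)%N by move=> i; apply: leq_trans (dec_le _ _ _) (hd1 i).
  have hd3 : forall i, (dec a k i <= m.+1)%N by move=> i; apply: leq_trans (dec_le _ _ _) (ha i).
  have hak : (0 < a k)%N by apply: leq_trans hj (hmax j).
  have hs3 : (\sum_i dec a k i).+1 = N by rewrite sum_dec.
  have eN1 : (m.+1 - N.-1 = e.+1)%N.
    rewrite /e; move: hs1 hNm; clear; lia.
  have hid0 := S_id A t hjk hj (hmax j) (ha k).
  apply: dvz_pmul => //.
  rewrite -[p%:R * S A a t](addrK (S A (dec (dec a j) k) t)) hid0.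
  apply: dvz_subr => //.
    apply: dvz_add => //.
      apply: dvz_sum => // c.
      rewrite -eN1; apply: IH; rewrite -?hs1 //.
      by rewrite unitmx_mul hA trv_unit.
    by rewrite -eN1; apply: IH; rewrite -?hs3.
  apply: (@dvz_mono (m.+1 - N.-2)).
    by rewrite -eN1 leq_sub2l // -hs2 /= leqnSn.
  by apply: IH; rewrite -?hs2.
have hz : forall i, i != k -> a i = 0%N.
  move=> i hik; move: (hnone i); rewrite /= hik /=.
  by case: (a i).
have eT : forall u, inT a u = dvz (a k) (u 0 k).
  move=> u; apply/forallP/idP => [h|h i]; first exact: h.
  case: (eqVneq i k) => [->//|hik]; by rewrite hz // dvz_e0.
rewrite /S.
have eS : forall h, F h * (inT a (h *m A - t))%:R =
    F h * (fun y => ((dvz (a k) (y - t 0 k))%:R : 'Z_(lvl p m))) ((h *m A) 0 k).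
  by move=> h; rewrite eT /= !mxE.
suff -> : \sum_h F h * (inT a (h *m A - t))%:R = 0 by exact: dvz0.
apply: (etrans _ (hF hA k (fun y => ((dvz (a k) (y - t 0 k))%:R : 'Z_(lvl p m))))).
apply: eq_bigr => h _; exact: eS.
Qed.

End Ind.


Theorem corollary7 (p d : nat) (hp : prime p) (hd : (2 <= d)%N) (f : R p d) :
  (forall y : 'I_d -> X p d, is_basis y -> in_ideal y f) -> R_is_zero f.
Proof.
move=> hf n; apply/ffunP => g0; rewrite ffunE.
pose m := (d.+1 * n.+1)%N.
have hnm : (n <= m)%N by rewrite /m; nia.
rewrite (iter_prA hp f hnm g0).
pose t : 'rV['Z_(lvl p m)]_d := map_mx (fun x => (val x)%:R) g0.
pose a : 'I_d -> nat := fun _ => n.+1.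
have hsum : (\sum_i a i)%N = (d * n.+1)%N by rewrite sum_nat_const card_ord.
have hdv := @main p hp d m hd _ (hyp_of hp hd hf (m:=m)) _ a 1%:M t hsum.
have hdv2 : dvz n.+1 (S (fun h => sval f m h) 1%:M a t).
  apply: (@dvz_mono p m (m.+1 - d * n.+1)).
    by rewrite /m; nia.
  apply: hdv; last exact: unitmx1.
  by move=> i; rewrite /a /m; nia.
have hg : forall i, (val (g0 0%R i) < lvl p n)%N.
  by move=> i; rewrite -[X in (_ < X)%N](Zp_cast (lvl_gt1 hp n)) ltn_ord.
have hlm : (lvl p n <= lvl p m)%N by rewrite /lvl leq_pexp2l ?prime_gt0 // ltnS.
have hc : forall h : 'rV['Z_(lvl p m)]_d, inT a (h *m 1%:M - t) = (map_mx (@redZ p m n) h == g0).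
  move=> h; rewrite mulmx1.
  have -> : (map_mx (@redZ p m n) h == g0) = [forall i, @redZ p m n (h 0 i) == g0 0 i].
    apply/eqP/forallP => [<- i|H]; first by rewrite mxE.
    by apply/matrixP => i' i; rewrite (ord1 i') mxE; exact/eqP.
  apply: eq_forallb => i.
  rewrite /a [(h - t) 0 i]mxE [(- t) 0 i]mxE (dvz_sub hp) ?ltnS //.
  rewrite !mxE valZ_nat // (modn_small (leq_trans (hg i) hlm)).
  rewrite -val_eqE /= /redZ valZ_nat // (modn_small (hg i)) eq_sym.
  by [].
have hS : \sum_(h | map_mx (@redZ p m n) h == g0) @redZ p m n (sval f m h) =
    @redZ p m n (S [eta sval f m] 1%:M a t).
  rewrite /S (redZ_sum hp) // [LHS]big_mkcond /=; apply: eq_bigr => h _.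
  rewrite (redZM hp) // (redZ_nat hp) // hc.
  by case: (_ == g0); rewrite ?mulr1 ?mulr0.
rewrite hS /redZ -Zp_nat_mod ?lvl_gt1 //.
move: hdv2; rewrite /dvz /dvdn /lvl => /eqP ->.
by [].
Qed.
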